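(* Let $V$ be a complex vector space of finite dimension $N$, let $(R,F)$ be a couple of compatible braidings on $V\otimes V$ with $F$ an involutive symmetry. Let $r(u,v)$ be either the braided rational $r$-matrix $r(u,v)=\frac{F}{u-v}$, or the braided trigonometric $r$-matrix $r(u,v)=\frac{F\,u}{u-v}-\frac{r}{2}$, where in the latter case $R=R(q)$ is a family of Hecke symmetries analytic in $q$ near $1$, compatible with $F$ for each $q$, with $R(1)=F$, and $r$ is defined by $R(q)F=I+h\,r+O(h^2)$, $q=e^h$. Then for any $N\times N$ matrix $A$ and any pairwise distinct positive integers $i,j,k$, $$ r_{\overline{ij}}(u,v)\,A_{\overline k}=A_{\overline k}\,r_{\overline{ij}}(u,v).$$
   Context: A braiding is an invertible $R\in\mathrm{End}(V\otimes V)$ with $(R\otimes I)(I\otimes R)(R\otimes I)=(I\otimes R)(R\otimes I)(I\otimes R)$; involutive symmetry: $R^2=I$; Hecke symmetry: $(R-qI)(R+q^{-1}I)=0$, $q\ne\pm1$. $X_{k,k+1}$ is $X$ acting on factors $k,k+1$ of $V^{\otimes n}$; $A_1=A\otimes I\otimes\cdots\otimes I$. Compatibility: $R_{12}F_{23}F_{12}=F_{23}F_{12}R_{23}$, $R_{23}F_{12}F_{23}=F_{12}F_{23}R_{12}$. Overlined indices: $A_{\overline 1}=A_1$, $A_{\overline{k+1}}=F_{k,k+1}A_{\overline k}F_{k,k+1}^{-1}$; for $X\in\mathrm{End}(V\otimes V)$ and $k<l$, $X_{\overline{kl}}=(F_{k-1,k}\cdots F_{12})(F_{l-1,l}\cdots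 F_{23})X_{12}(F_{23}^{-1}\cdots F_{l-1,l}^{-1})(F_{12}^{-1}\cdots F_{k-1,k}^{-1})$ and $X_{\overline{lk}}:=(FXF)_{\overline{kl}}$; for parameter-dependent $X(u,v)$ this is applied for fixed $(u,v)$. *)

(* Defs.v *)
(* V = C^N with C = R[i] the complex numbers over a
   real-closed complete archimedean field R : realType (i.e. R = the reals). *)
From HB Require Import structures.
From mathcomp Require Import all_boot all_order all_algebra.
From mathcomp Require Import complex mxtens.
From mathcomp Require Import reals sequences exp trigo.
Set Implicit Arguments. Unset Strict Implicit. Unset Printing Implicit Defensive.
Import Order.TTheory GRing.Theory Num.Theory.
Local Open Scope ring_scope.
Local Open Scope complex_scope.

Section Braided.
Variable R : realType.
Local Notation C := R[i].
Variable N : nat.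
(* End(V) = 'M[C]_N, End(V (x) V) = 'M[C]_(N*N), End(V^{(x) n}) = 'M[C]_(N^n);
   tensor products of operators are Kronecker products (mxtens.tensmx, A *t B). *)

(* X_{k,k+1}: X acting on factors k,k+1 (1-based) of V^{(x) n}
   = I_{N^(k-1)} (x) X (x) I_{N^(n-k-1)}  (for 1 <= k < n; the dimensions
   then agree exactly, so conform_mx is the identity cast). *)
Definition op2 (n k : nat) (X : 'M[C]_(N * N)) : 'M[C]_(N ^ n) :=
  conform_mx 1%:M
    ((1%:M : 'M[C]_(N ^ k.-1)) *t X *t (1%:M : 'M[C]_(N ^ (n - k.+1)))).

Definition op1 (n : nat) (A : 'M[C]_N) : 'M[C]_(N ^ n) :=
  conform_mx 1%:M (A *t (1%:M : 'M[C]_(N ^ n.-1))).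

Definition is_braiding (X : 'M[C]_(N * N)) : Prop :=
  X \in unitmx /\
  op2 3 1 X *m op2 3 2 X *m op2 3 1 X = op2 3 2 X *m op2 3 1 X *m op2 3 2 X.

Definition is_involutive (X : 'M[C]_(N * N)) : Prop := X *m X = 1%:M.

Definition is_hecke (q : C) (X : 'M[C]_(N * N)) : Prop :=
  is_braiding X /\ q != 1 /\ q != -1 /\
  (X - q%:M) *m (X + q^-1%:M) = 0.

Definition compatible (X F : 'M[C]_(N * N)) : Prop :=
  op2 3 1 X *m op2 3 2 F *m op2 3 1 F = op2 3 2 F *m op2 3 1 F *m op2 3 2 X /\
  op2 3 2 X *m op2 3 1 F *m op2 3 2 F = op2 3 1 F *m op2 3 2 F *m op2 3 1 X.

Section Overline.
Variables (n : nat) (F : 'M[C]_(N * N)).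
Local Notation Fk k := (op2 n k F).

Fixpoint Pd (m : nat) : 'M[C]_(N ^ n) :=
  if m is m'.+1 then Fk m *m Pd m' else 1%:M.
Fixpoint Pdi (m : nat) : 'M[C]_(N ^ n) :=
  if m is m'.+1 then Pdi m' *m invmx (Fk m) else 1%:M.
Fixpoint Qd (m : nat) : 'M[C]_(N ^ n) :=
  if m is m'.+1 then Fk m.+1 *m Qd m' else 1%:M.
Fixpoint Qdi (m : nat) : 'M[C]_(N ^ n) :=
  if m is m'.+1 then Qdi m' *m invmx (Fk m.+1) else 1%:M.

(* Abar0 m = A_{\overline{m+1}} *)
Fixpoint Abar0 (A : 'M[C]_N) (m : nat) : 'M[C]_(N ^ n) :=
  if m is m'.+1 then Fk m *m Abar0 A m' *m invmx (Fk m) else op1 n A.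

Definition Abar (A : 'M[C]_N) (k : nat) : 'M[C]_(N ^ n) := Abar0 A k.-1.

(* X_{\overline{kl}} for k < l:
   (F_{k-1,k}..F_{12})(F_{l-1,l}..F_{23}) X_{12} (F_{23}^{-1}..F_{l-1,l}^{-1})
   (F_{12}^{-1}..F_{k-1,k}^{-1}) *)
Definition Xbar_lt (X : 'M[C]_(N * N)) (k l : nat) : 'M[C]_(N ^ n) :=
  Pd k.-1 *m Qd l.-2 *m op2 n 1 X *m Qdi l.-2 *m Pdi k.-1.

Definition Xbar (X : 'M[C]_(N * N)) (k l : nat) : 'M[C]_(N ^ n) :=
  if (k < l)%N then Xbar_lt X k l else Xbar_lt (F *m X *m F) l k.
End Overline.

Definition rat_r (F : 'M[C]_(N * N)) (u v : C) : 'M[C]_(N * N) :=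
  (u - v)^-1 *: F.

Definition trig_r (F r0 : 'M[C]_(N * N)) (u v : C) : 'M[C]_(N * N) :=
  (u / (u - v)) *: F - 2^-1 *: r0.

Definition expC (h : C) : C :=
  (expR (complex.Re h) * cos (complex.Im h)) +i* (expR (complex.Re h) * sin (complex.Im h)).

Definition analytic_near1 (Rq : C -> 'M[C]_(N * N)) (rho : C) : Prop :=
  exists c : nat -> 'M[C]_(N * N),
    forall q, `|q - 1| < rho -> forall a b, forall eps : C, 0 < eps ->
      exists K : nat, forall m, (K <= m)%N ->
        `|\sum_(s < m) c s a b * (q - 1) ^+ s - Rq q a b| < eps.

Definition trig_expansion (Rq : C -> 'M[C]_(N * N)) (F r0 : 'M[C]_(N * N)) : Prop :=
  exists M delta : C, 0 <= M /\ 0 < delta /\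
    forall h : C, `|h| < delta -> forall a b,
      `|(Rq (expC h) *m F - 1%:M - h *: r0) a b| <= M * `|h| ^+ 2.

Definition trig_family (F : 'M[C]_(N * N)) (Rq : C -> 'M[C]_(N * N))
    (r0 : 'M[C]_(N * N)) : Prop :=
  exists rho : C, 0 < rho /\ analytic_near1 Rq rho /\
    (forall q, `|q - 1| < rho ->
       compatible (Rq q) F /\ (q != 1 -> q != -1 -> is_hecke q (Rq q))) /\
    Rq 1 = F /\ trig_expansion Rq F r0.

End Braided.

(* Main.v *)
Require Import Defs.
From Stdlib Require Eqdep_dec PeanoNat.
From HB Require Import structures.
From mathcomp Require Import all_boot all_order all_algebra.
From mathcomp Require Import complex mxtens.
From mathcomp Require Import reals sequences exp trigo.
From mathcomp Require Import zify lra.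
Import Order.TTheory GRing.Theory Num.Theory.
Local Open Scope ring_scope.

Set Implicit Arguments. Unset Strict Implicit. Unset Printing Implicit Defensive.

Section Generic.
Variable K : fieldType.
Variable N : nat.

Definition op2g (n k : nat) (X : 'M[K]_(N * N)) : 'M[K]_(N ^ n) :=
  conform_mx 1%:M
    ((1%:M : 'M[K]_(N ^ k.-1)) *t X *t (1%:M : 'M[K]_(N ^ (n - k.+1)))).

Definition op1g (n : nat) (A : 'M[K]_N) : 'M[K]_(N ^ n) :=
  conform_mx 1%:M (A *t (1%:M : 'M[K]_(N ^ n.-1))).

Definition is_braidingg (X : 'M[K]_(N * N)) : Prop :=
  X \in unitmx /\
  op2g 3 1 X *m op2g 3 2 X *m op2g 3 1 X = op2g 3 2 X *m op2g 3 1 X *m op2g 3 2 X.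

Definition is_involutiveg (X : 'M[K]_(N * N)) : Prop := X *m X = 1%:M.

Definition compatibleg (X F : 'M[K]_(N * N)) : Prop :=
  op2g 3 1 X *m op2g 3 2 F *m op2g 3 1 F = op2g 3 2 F *m op2g 3 1 F *m op2g 3 2 X /\
  op2g 3 2 X *m op2g 3 1 F *m op2g 3 2 F = op2g 3 1 F *m op2g 3 2 F *m op2g 3 1 X.

Section Overline.
Variables (n : nat) (F : 'M[K]_(N * N)).
Local Notation Fk k := (op2g n k F).

Fixpoint Pdg (m : nat) : 'M[K]_(N ^ n) :=
  if m is m'.+1 then Fk m *m Pdg m' else 1%:M.
Fixpoint Pdig (m : nat) : 'M[K]_(N ^ n) :=
  if m is m'.+1 then Pdig m' *m invmx (Fk m) else 1%:M.
Fixpoint Qdg (m : nat) : 'M[K]_(N ^ n) :=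
  if m is m'.+1 then Fk m.+1 *m Qdg m' else 1%:M.
Fixpoint Qdig (m : nat) : 'M[K]_(N ^ n) :=
  if m is m'.+1 then Qdig m' *m invmx (Fk m.+1) else 1%:M.
Fixpoint Abar0g (A : 'M[K]_N) (m : nat) : 'M[K]_(N ^ n) :=
  if m is m'.+1 then Fk m *m Abar0g A m' *m invmx (Fk m) else op1g n A.
Definition Xbar_ltg (X : 'M[K]_(N * N)) (k l : nat) : 'M[K]_(N ^ n) :=
  Pdg k.-1 *m Qdg l.-2 *m op2g n 1 X *m Qdig l.-2 *m Pdig k.-1.
End Overline.
End Generic.

Section SM.
Variable K : fieldType.
Local Notation C := K.

Definition Sm := {m : nat & 'M[C]_m}.
Definition sm m (A : 'M[C]_m) : Sm := existT _ m A.

Lemma sm_inj m (A B : 'M[C]_m) : sm A = sm B -> A = B.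
Proof. by apply: Eqdep_dec.inj_pair2_eq_dec; exact: PeanoNat.Nat.eq_dec. Qed.

Lemma sm_dim m m' (A : 'M[C]_m) (B : 'M[C]_m') : sm A = sm B -> m = m'.
Proof. by move/(f_equal (@projT1 _ _)). Qed.

Lemma sm_cast m m' (e : m = m') (A : 'M[C]_m) : sm (castmx (e,e) A) = sm A.
Proof. by case: m' / e; rewrite castmx_id. Qed.

Lemma sm_conform m m' (A : 'M[C]_m) : m = m' -> sm (conform_mx (1%:M : 'M_m') A) = sm A.
Proof. by move=> e; case: m' / e; rewrite conform_mx_id. Qed.

Lemma sm1 m m' : m = m' -> sm (1%:M : 'M[C]_m) = sm (1%:M : 'M[C]_m').
Proof. by move->. Qed.

Lemma sm_mul m m' (A B : 'M[C]_m) (A' B' : 'M[C]_m') :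
  sm A = sm A' -> sm B = sm B' -> sm (A *m B) = sm (A' *m B').
Proof.
move=> e1; have e := sm_dim e1; case: m' / e in A' B' e1 *.
by move/sm_inj: e1 => ->; move=> /sm_inj ->.
Qed.

Lemma sm_add m m' (A B : 'M[C]_m) (A' B' : 'M[C]_m') :
  sm A = sm A' -> sm B = sm B' -> sm (A + B) = sm (A' + B').
Proof.
move=> e1; have e := sm_dim e1; case: m' / e in A' B' e1 *.
by move/sm_inj: e1 => ->; move=> /sm_inj ->.
Qed.

Lemma sm_scale m m' c (A : 'M[C]_m) (A' : 'M[C]_m') :
  sm A = sm A' -> sm (c *: A) = sm (c *: A').
Proof.
move=> e1; have e := sm_dim e1; case: m' / e in A' e1 *.
by move/sm_inj: e1 => ->.
Qed.

Lemma sm_tens m m' p p' (A : 'M[C]_m) (A' : 'M[C]_m') (B : 'M[C]_p) (B' : 'M[C]_p') :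
  sm A = sm A' -> sm B = sm B' -> sm (A *t B) = sm (A' *t B').
Proof.
move=> e1; have e := sm_dim e1; case: m' / e in A' e1 *.
move=> e2; have e := sm_dim e2; case: p' / e in B' e2 *.
by move/sm_inj: e1 => ->; move/sm_inj: e2 => ->.
Qed.

Lemma tens11 m p : (1%:M : 'M[C]_m) *t (1%:M : 'M[C]_p) = 1%:M.
Proof.
apply/matrixP => i j; case: (mxtens_indexP i) => i1 i2; case: (mxtens_indexP j) => j1 j2.
rewrite tensmxE !mxE (inj_eq (can_inj (@mxtens_indexK m p))) xpair_eqE.
by case: (i1 == j1); case: (i2 == j2); rewrite /= ?mulr1 ?mul0r ?mulr0.
Qed.

Lemma tensA m p q (A : 'M[C]_m) (B : 'M[C]_p) (D : 'M[C]_q) :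
  sm ((A *t B) *t D) = sm (A *t (B *t D)).
Proof.
rewrite -(sm_cast (esym (mulnA m p q))); congr existT; apply/matrixP => i j.
case: (mxtens_indexP i) => i1 i23; case: (mxtens_indexP i23) => i2 i3.
case: (mxtens_indexP j) => j1 j23; case: (mxtens_indexP j23) => j2 j3.
rewrite castmxE.
have H : forall (a1 : 'I_m) (a2 : 'I_p) (a3 : 'I_q),
  cast_ord (esym (esym (mulnA m p q))) (mxtens_index (a1, mxtens_index (a2, a3)))
  = mxtens_index (mxtens_index (a1, a2), a3).
  by move=> a1 a2 a3; apply: val_inj => /=; rewrite mulnDl -mulnA addnA.
by rewrite !H !tensmxE mulrA.
Qed.

Lemma tens1l m (A : 'M[C]_m) : sm ((1%:M : 'M[C]_1) *t A) = sm A.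
Proof. by have := tens_scalar1mx A; rewrite /= => ->; rewrite sm_cast. Qed.

Lemma tens1r m (A : 'M[C]_m) : sm (A *t (1%:M : 'M[C]_1)) = sm A.
Proof. by rewrite tens_mx_scalar scale1r sm_cast. Qed.

End SM.

Section Ops.
Variable K : fieldType.
Local Notation C := K.
Variable N : nat.
Local Notation I k := (1%:M : 'M[C]_(N ^ k)).
Local Notation sm := (@sm K _).
Local Notation op2 := (@op2g K N).
Local Notation op1 := (@op1g K N).

Lemma op2E n k X : (0 < k < n)%N ->
  sm (op2 n k X) = sm (I k.-1 *t (X *t I (n - k.+1))).
Proof.
move=> hk; rewrite /op2g sm_conform ?tensA //.
have -> : (N * N = N ^ 2)%N by rewrite expnS expn1.
rewrite -!expnD; congr expn; lia.
Qed.

Lemma op1E n A : (0 < n)%N -> sm (op1 n A) = sm (A *t I n.-1).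
Proof. by move=> hn; rewrite /op1g sm_conform // -expnS prednK. Qed.

Definition emb n a (M : 'M[C]_(N ^ 3)) := I a.-1 *t (M *t I (n - a.+2)).

Lemma embM n a M1 M2 : emb n a M1 *m emb n a M2 = emb n a (M1 *m M2).
Proof. by rewrite /emb !tensmx_mul !mulmx1. Qed.

Lemma op2M n k X Y : (0 < k < n)%N -> op2 n k X *m op2 n k Y = op2 n k (X *m Y).
Proof.
move=> hk; apply: sm_inj; rewrite (sm_mul (op2E X hk) (op2E Y hk)) op2E //.
by rewrite !tensmx_mul !mulmx1.
Qed.

Lemma op21 n k : (0 < k < n)%N -> op2 n k 1%:M = 1%:M.
Proof.
move=> hk; apply: sm_inj; rewrite op2E // !tens11; apply: sm1.
have -> : (N * N = N ^ 2)%N by rewrite expnS expn1.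
rewrite -!expnD; congr expn; lia.
Qed.

Lemma tensDr m p (A : 'M[C]_m) (B D : 'M[C]_p) : A *t (B + D) = A *t B + A *t D.
Proof. by apply/matrixP => i j; rewrite !mxE mulrDr. Qed.
Lemma tensDl m p (A D : 'M[C]_m) (B : 'M[C]_p) : (A + D) *t B = A *t B + D *t B.
Proof. by apply/matrixP => i j; rewrite !mxE mulrDl. Qed.
Lemma tensZr m p c (A : 'M[C]_m) (B : 'M[C]_p) : A *t (c *: B) = c *: (A *t B).
Proof. by apply/matrixP => i j; rewrite !mxE mulrCA. Qed.
Lemma tensZl m p c (A : 'M[C]_m) (B : 'M[C]_p) : (c *: A) *t B = c *: (A *t B).
Proof. by apply/matrixP => i j; rewrite !mxE mulrA. Qed.

Lemma op2D n k X Y : (0 < k < n)%N -> op2 n k (X + Y) = op2 n k X + op2 n k Y.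
Proof.
move=> hk; apply: sm_inj; rewrite (sm_add (op2E X hk) (op2E Y hk)) op2E //.
by rewrite tensDl tensDr.
Qed.

Lemma op2Z n k c X : (0 < k < n)%N -> op2 n k (c *: X) = c *: op2 n k X.
Proof.
move=> hk; apply: sm_inj; rewrite (sm_scale c (op2E X hk)) op2E //.
by rewrite tensZl tensZr.
Qed.

Lemma op2_far n a b X Y : (0 < a)%N -> (a.+1 < b)%N -> (b < n)%N ->
  op2 n a X *m op2 n b Y = op2 n b Y *m op2 n a X.
Proof.
move=> ha hab hbn.
have ea : (0 < a < n)%N by lia.
have eb : (0 < b < n)%N by lia.
pose d := (b - a.+2)%N.
have E1 : sm (op2 n a X) =
   sm (I a.-1 *t (X *t (I d *t ((1%:M : 'M_(N * N)) *t I (n - b.+1))))).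
  rewrite op2E //; apply: sm_tens => //; apply: sm_tens => //.
  rewrite !tens11; apply: sm1.
  have -> : (N * N = N ^ 2)%N by rewrite expnS expn1.
  rewrite -!expnD; congr expn; lia.
have E2 : sm (op2 n b Y) =
   sm (I a.-1 *t ((1%:M : 'M_(N * N)) *t (I d *t (Y *t I (n - b.+1))))).
  rewrite op2E //.
  transitivity (sm ((I a.-1 *t ((1%:M:'M_(N*N)) *t I d)) *t (Y *t I (n - b.+1)))).
    apply: sm_tens => //; rewrite !tens11; apply: sm1.
    have -> : (N * N = N ^ 2)%N by rewrite expnS expn1.
    rewrite -!expnD; congr expn; lia.
  rewrite tensA; apply: sm_tens => //; exact: tensA.
apply: sm_inj; rewrite (sm_mul E1 E2) (sm_mul E2 E1).
by rewrite !tensmx_mul !mulmx1 !mul1mx.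
Qed.

Lemma op1_op2 n b A Y : (1 < b)%N -> (b < n)%N ->
  op1 n A *m op2 n b Y = op2 n b Y *m op1 n A.
Proof.
move=> hb hbn.
have eb : (0 < b < n)%N by lia.
have E1 : sm (op1 n A) =
   sm (A *t (I (b.-2) *t ((1%:M : 'M_(N * N)) *t I (n - b.+1)))).
  rewrite op1E; last lia.
  apply: sm_tens => //; rewrite !tens11; apply: sm1.
  have -> : (N * N = N ^ 2)%N by rewrite expnS expn1.
  rewrite -!expnD; congr expn; lia.
have E2 : sm (op2 n b Y) =
   sm ((1%:M : 'M_N) *t (I b.-2 *t (Y *t I (n - b.+1)))).
  rewrite op2E //.
  transitivity (sm (((1%:M : 'M_N) *t I b.-2) *t (Y *t I (n - b.+1)))).
    apply: sm_tens => //; rewrite tens11; apply: sm1.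
    rewrite -expnS; congr expn; lia.
  exact: tensA.
apply: sm_inj; rewrite (sm_mul E1 E2) (sm_mul E2 E1).
by rewrite !tensmx_mul !mulmx1 !mul1mx.
Qed.

Lemma lift1 n a X : (0 < a)%N -> (a.+1 < n)%N ->
  sm (op2 n a X) = sm (emb n a (op2 3 1 X)).
Proof.
move=> ha han; rewrite /emb op2E; last lia.
apply: sm_tens => //; symmetry.
rewrite (sm_tens (op2E X (isT : (0 < 1 < 3)%N)) (erefl _)).
transitivity (sm (((1%:M : 'M_1) *t (X *t I 1)) *t I (n - a.+2))).
  by apply: sm_tens => //; apply: sm_tens => //; apply: sm1; rewrite expn0.
rewrite (sm_tens (tens1l _) (erefl _)) tensA.
apply: sm_tens => //; rewrite tens11; apply: sm1.
rewrite -expnD; congr expn; lia.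
Qed.

Lemma lift2 n a X : (0 < a)%N -> (a.+1 < n)%N ->
  sm (op2 n a.+1 X) = sm (emb n a (op2 3 2 X)).
Proof.
move=> ha han; rewrite /emb op2E; last lia.
symmetry.
rewrite (sm_tens (erefl _)
   (sm_tens (op2E X (isT : (0 < 2 < 3)%N)) (erefl _))).
transitivity (sm (I a.-1 *t ((I 1 *t X) *t I (n - a.+2)))).
  apply: sm_tens => //; apply: sm_tens => //.
  rewrite -tensA.
  transitivity (sm ((I 1 *t X) *t (1%:M : 'M_1))); last exact: tens1r.
  by apply: sm_tens => //; apply: sm1; rewrite expn0.
rewrite (sm_tens (erefl _) (tensA _ _ _)) -tensA.
apply: sm_tens => //; rewrite tens11; apply: sm1.
rewrite -expnD; congr expn; lia.
Qed.
End Ops.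

Section Braid.
Variable K : fieldType.
Local Notation C := K.
Variable N : nat.
Variable n : nat.
Variable F : 'M[C]_(N * N).
Hypothesis HFb : is_braidingg F.
Hypothesis HFi : is_involutiveg F.
Local Notation sm := (@sm K _).
Local Notation op2 := (@op2g K N).
Local Notation op1 := (@op1g K N).
Local Notation T k := (op2 n k F).
Local Notation Pd := (@Pdg K N n F).
Local Notation Pdi := (@Pdig K N n F).
Local Notation Qd := (@Qdg K N n F).
Local Notation Qdi := (@Qdig K N n F).
Local Notation Abar0 := (@Abar0g K N n F).
Local Opaque op2g op1g.

Lemma TT k : (0 < k < n)%N -> T k *m T k = 1%:M.
Proof. by move=> hk; rewrite op2M // HFi op21. Qed.

Lemma Tinv k : (0 < k < n)%N -> invmx (T k) = T k.
Proof.
move=> hk; have [u _] := mulmx1_unit (TT hk).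
by rewrite -[invmx _]mulmx1 -(TT hk) mulmxA mulVmx // mul1mx.
Qed.

Lemma PdiS m : (m.+1 < n)%N -> Pdi m.+1 = Pdi m *m T m.+1.
Proof. by move=> h; rewrite /= Tinv //; lia. Qed.

Lemma QdiS m : (m.+2 < n)%N -> Qdi m.+1 = Qdi m *m T m.+2.
Proof. by move=> h; rewrite /= Tinv //; lia. Qed.

Lemma Abar0S A a : (a.+1 < n)%N -> Abar0 A a.+1 = T a.+1 *m Abar0 A a *m T a.+1.
Proof. by move=> h; rewrite /= Tinv //; lia. Qed.

Lemma PdK m : (m < n)%N -> Pd m *m Pdi m = 1%:M /\ Pdi m *m Pd m = 1%:M.
Proof.
elim: m => [|m IH] h; first by rewrite /= mulmx1.
have [h1 h2] := IH (ltnW h).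
rewrite PdiS //= -!mulmxA (mulmxA (Pd m)) h1 mul1mx TT; last lia.
by rewrite (mulmxA (T _)) TT ?mul1mx //; lia.
Qed.

Lemma QdK m : (m.+1 < n)%N -> Qd m *m Qdi m = 1%:M /\ Qdi m *m Qd m = 1%:M.
Proof.
elim: m => [|m IH] h; first by rewrite /= mulmx1.
have [h1 h2] := IH (ltnW h).
rewrite QdiS //= -!mulmxA (mulmxA (Qd m)) h1 mul1mx TT; last lia.
by rewrite (mulmxA (T _)) TT ?mul1mx //; lia.
Qed.

Lemma T_Pd m b : (b.+2 <= m)%N -> (m < n)%N -> T m *m Pd b = Pd b *m T m.
Proof.
elim: b => [|b IH] h1 h2; first by rewrite /= mulmx1 mul1mx.
rewrite /= mulmxA -op2_far //; try lia.
by rewrite -mulmxA IH ?mulmxA //; lia.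
Qed.

Lemma T_Pdi m b : (b.+2 <= m)%N -> (m < n)%N -> T m *m Pdi b = Pdi b *m T m.
Proof.
elim: b => [|b IH] h1 h2; first by rewrite /= mulmx1 mul1mx.
rewrite PdiS; last lia.
rewrite mulmxA (IH ltac:(lia) h2).
by rewrite -!mulmxA -op2_far //; lia.
Qed.

Lemma Tbr a : (0 < a)%N -> (a.+1 < n)%N ->
  T a *m T a.+1 *m T a = T a.+1 *m T a *m T a.+1.
Proof.
move=> h1 h2; apply: sm_inj.
rewrite (sm_mul (sm_mul (lift1 _ h1 h2) (lift2 _ h1 h2)) (lift1 _ h1 h2)).
rewrite (sm_mul (sm_mul (lift2 _ h1 h2) (lift1 _ h1 h2)) (lift2 _ h1 h2)).
by rewrite !embM; case: HFb => _ ->.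
Qed.

Lemma T_shift m b : (0 < m)%N -> (m < b)%N -> (b < n)%N ->
  T m *m Pd b = Pd b *m T m.+1.
Proof.
move=> h0; elim: b => [|b IH] // h1 h2.
case: (ltnP m b) => hmb.
- rewrite /= mulmxA op2_far //; try lia.
  by rewrite -mulmxA (IH hmb ltac:(lia)) mulmxA.
- have eb : b = m by lia.
  subst b; clear hmb IH.
  case: m h0 h1 h2 => [|m] // h0 h1 h2.
  rewrite /= !mulmxA Tbr //; try lia.
  rewrite -!mulmxA; congr (_ *m (_ *m _)).
  by rewrite T_Pd //; lia.
Qed.

Lemma T_shifti m b : (0 < m)%N -> (m < b)%N -> (b < n)%N ->
  Pdi b *m T m = T m.+1 *m Pdi b.
Proof.
move=> h0 h1 h2; have [k1 k2] := PdK h2.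
rewrite -[Pdi b *m T m]mulmx1 -k1 !mulmxA -(mulmxA _ (T m)) T_shift //.
by rewrite mulmxA k2 mul1mx.
Qed.

Lemma AbarE A a : (a < n)%N -> Abar0 A a = Pd a *m op1 n A *m Pdi a.
Proof.
elim: a => [|a IH] h; first by rewrite /= mulmx1 mul1mx.
rewrite Abar0S // IH; last lia.
by rewrite PdiS // /= !mulmxA.
Qed.

Lemma Tfix A m a : (0 < m < n)%N -> (a < n)%N -> m != a -> m != a.+1 ->
  T m *m Abar0 A a *m T m = Abar0 A a.
Proof.
move=> hm ha h1 h2; rewrite AbarE //.
case: (ltngtP m a) => hma; last by rewrite hma eqxx in h1.
- rewrite !mulmxA T_shift //; try lia.
  rewrite -!mulmxA T_shifti //; try lia.
  rewrite (mulmxA (T m.+1)) -op1_op2; try lia.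
  by rewrite (mulmxA _ (T m.+1)) -(mulmxA (op1 n A)) TT ?mulmx1 //; lia.
- have h3 : (a.+2 <= m)%N by rewrite ltn_neqAle eq_sym h2 hma.
  rewrite !mulmxA T_Pd //; try lia.
  rewrite -(mulmxA (Pd a)) -op1_op2; try lia.
  rewrite -!mulmxA (mulmxA (T m)) T_Pdi //; try lia.
  by rewrite -mulmxA TT ?mulmx1 //; lia.
Qed.

Lemma conjP A m : (m < n)%N -> forall a, (a < n)%N ->
  ((a < m)%N -> Pdi m *m Abar0 A a *m Pd m = Abar0 A a.+1) /\
  ((m < a)%N -> Pdi m *m Abar0 A a *m Pd m = Abar0 A a).
Proof.
elim: m => [|m IH] hm a ha.
  by split => // _; rewrite /= mulmx1 mul1mx.
have e : Pdi m.+1 *m Abar0 A a *m Pd m.+1 =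
         Pdi m *m (T m.+1 *m Abar0 A a *m T m.+1) *m Pd m.
  by rewrite PdiS // /= !mulmxA.
rewrite e; split => h.
- case: (ltnP a m) => h'.
  + rewrite Tfix //; try lia.
    by have [H _] := IH (ltnW hm) a ha; rewrite H.
  + have ea : a = m by lia.
    subst a; rewrite -Abar0S //.
    by have [_ H] := IH (ltnW hm) m.+1 hm; rewrite H.
- rewrite Tfix //; try lia.
  by have [_ H] := IH (ltnW hm) a ha; rewrite H //; lia.
Qed.

Lemma conjQ A m : (m.+1 < n)%N -> forall a, (a < n)%N ->
  ((0 < a <= m)%N -> Qdi m *m Abar0 A a *m Qd m = Abar0 A a.+1) /\
  ((m.+1 < a)%N -> Qdi m *m Abar0 A a *m Qd m = Abar0 A a).
Proof.
elim: m => [|m IH] hm a ha.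
  by split => [|_]; [lia | rewrite /= mulmx1 mul1mx].
have e : Qdi m.+1 *m Abar0 A a *m Qd m.+1 =
         Qdi m *m (T m.+2 *m Abar0 A a *m T m.+2) *m Qd m.
  by rewrite QdiS // /= !mulmxA.
rewrite e; split => h.
- case: (ltnP a m.+1) => h'.
  + rewrite Tfix //; try lia.
    by have [H _] := IH (ltnW hm) a ha; rewrite H //; lia.
  + have ea : a = m.+1 by lia.
    subst a; rewrite -Abar0S //.
    by have [_ H] := IH (ltnW hm) m.+2 hm; rewrite H.
- rewrite Tfix //; try lia.
  by have [_ H] := IH (ltnW hm) a ha; rewrite H //; lia.
Qed.

Lemma C1 X : compatibleg X F -> (2 < n)%N ->
  op2 n 1 X *m T 2 *m T 1 = T 2 *m T 1 *m op2 n 2 X.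
Proof.
move=> [H1 _] hn; have h1 : (0 < 1)%N by []; have h2 : (2 < n)%N by [].
apply: sm_inj.
rewrite (sm_mul (sm_mul (lift1 _ h1 h2) (lift2 _ h1 h2)) (lift1 _ h1 h2)).
rewrite (sm_mul (sm_mul (lift2 _ h1 h2) (lift1 _ h1 h2)) (lift2 _ h1 h2)).
by rewrite !embM H1.
Qed.

Lemma C2 X : compatibleg X F -> (2 < n)%N ->
  op2 n 2 X *m T 1 *m T 2 = T 1 *m T 2 *m op2 n 1 X.
Proof.
move=> [_ H2] hn; have h1 : (0 < 1)%N by []; have h2 : (2 < n)%N by [].
apply: sm_inj.
rewrite (sm_mul (sm_mul (lift2 _ h1 h2) (lift1 _ h1 h2)) (lift2 _ h1 h2)).
rewrite (sm_mul (sm_mul (lift1 _ h1 h2) (lift2 _ h1 h2)) (lift1 _ h1 h2)).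
by rewrite !embM H2.
Qed.

Lemma XA X A a : compatibleg X F -> (1 < a < n)%N ->
  op2 n 1 X *m Abar0 A a = Abar0 A a *m op2 n 1 X.
Proof.
move=> hX; elim: a => [|a IH] // h.
case: (ltnP 1 a) => ha.
- have h1 : (a.+1 < n)%N by case/andP: h.
  have h2 : (1 < a < n)%N by apply/andP; split => //; lia.
  have h3 : (2 < a.+1)%N by lia.
  rewrite (Abar0S A h1) !mulmxA (op2_far X F (isT : (0 < 1)%N) h3 h1).
  rewrite -(mulmxA _ (op2 n 1 X)) (IH h2) !mulmxA -!mulmxA.
  by rewrite (op2_far X F (isT : (0 < 1)%N) h3 h1).
- have ea : a = 1%N by lia.
  subst a.
  have h2n : (2 < n)%N by case/andP: h.
  have h1n : (1 < n)%N by lia.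
  rewrite (Abar0S A h2n) (Abar0S A h1n).
  change (Abar0 A 0) with (op1 n A).
  rewrite !mulmxA (C1 hX h2n).
  rewrite -(mulmxA (T 2 *m T 1) (op2 n 2 X) (op1 n A)).
  rewrite -(op1_op2 A X (isT : (1 < 2)%N) h2n).
  rewrite -!mulmxA (mulmxA (op2 n 2 X) (T 1)) (C2 hX h2n).
  by rewrite !mulmxA.
Qed.

Lemma conj_comm m (U V X Ab B : 'M[C]_m) :
  U *m V = 1%:M -> V *m U = 1%:M -> V *m Ab *m U = B -> X *m B = B *m X ->
  U *m X *m V *m Ab = Ab *m (U *m X *m V).
Proof.
move=> h1 h2 h3 h4.
have eAb : Ab = U *m B *m V by rewrite -h3 !mulmxA h1 mul1mx -mulmxA h1 mulmx1.
rewrite eAb; transitivity (U *m (X *m B) *m V).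
  by rewrite !mulmxA -(mulmxA (U *m X) V U) h2 mulmx1.
by rewrite h4 !mulmxA -(mulmxA (U *m B) V U) h2 mulmx1.
Qed.

Lemma goodX X A i j k : compatibleg X F ->
  (0 < i)%N -> (i < j)%N -> (j <= n)%N -> (0 < k)%N -> (k <= n)%N ->
  k != i -> k != j ->
  Xbar_ltg n F X i j *m Abar0 A k.-1 = Abar0 A k.-1 *m Xbar_ltg n F X i j.
Proof.
move=> hX hi hij hj hk hkn hki hkj.
have hin : (i.-1 < n)%N by lia.
have [P1 P2] := PdK hin.
have [Q1 Q2] : Qd j.-2 *m Qdi j.-2 = 1%:M /\ Qdi j.-2 *m Qd j.-2 = 1%:M.
  by apply: QdK; lia.
set U := Pd i.-1 *m Qd j.-2.
set V := Qdi j.-2 *m Pdi i.-1.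
have -> : Xbar_ltg n F X i j = U *m op2 n 1 X *m V by rewrite /Xbar_ltg /U /V !mulmxA.
have eB : V *m Abar0 A k.-1 *m U =
   Qdi j.-2 *m (Pdi i.-1 *m Abar0 A k.-1 *m Pd i.-1) *m Qd j.-2.
  by rewrite /U /V !mulmxA.
have hUV : U *m V = 1%:M.
  by rewrite /U /V -mulmxA (mulmxA (Qd _)) Q1 mul1mx.
have hVU : V *m U = 1%:M.
  by rewrite /U /V -mulmxA (mulmxA (Pdi _)) P2 mul1mx.
have hk1 : (k.-1 < n)%N by lia.
have [P3 P4] := conjP A hin hk1.
have hjn : (j.-2.+1 < n)%N by lia.
case: (ltnP k i) => hki'.
- have hkn' : (k < n)%N by lia.
  have [Q3 Q4] := conjQ A hjn hkn'.
  apply: (conj_comm hUV hVU eB); rewrite P3; last lia.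
  rewrite prednK // Q3; last lia.
  by apply: XA => //; lia.
case: (ltnP k j) => hkj'.
- have [Q3 Q4] := conjQ A hjn hk1.
  apply: (conj_comm hUV hVU eB); rewrite P4; last lia.
  rewrite Q3; last lia.
  by rewrite prednK //; apply: XA => //; lia.
- have [Q3 Q4] := conjQ A hjn hk1.
  apply: (conj_comm hUV hVU eB); rewrite P4; last lia.
  rewrite Q4; last lia.
  by apply: XA => //; lia.
Qed.

Lemma XbarU i j : (0 < i)%N -> (i < j)%N -> (j <= n)%N ->
  exists U V : 'M[C]_(N ^ n), [/\ U *m V = 1%:M, V *m U = 1%:M &
    forall X, Xbar_ltg n F X i j = U *m op2 n 1 X *m V].
Proof.
move=> hi hij hj.
have hin : (i.-1 < n)%N by lia.
have [P1 P2] := PdK hin.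
have [Q1 Q2] : Qd j.-2 *m Qdi j.-2 = 1%:M /\ Qdi j.-2 *m Qd j.-2 = 1%:M.
  by apply: QdK; lia.
exists (Pd i.-1 *m Qd j.-2), (Qdi j.-2 *m Pdi i.-1); split.
- by rewrite -mulmxA (mulmxA (Qd _)) Q1 mul1mx.
- by rewrite -mulmxA (mulmxA (Pdi _)) P2 mul1mx.
- by move=> X; rewrite /Xbar_ltg !mulmxA.
Qed.

Definition good A i j k X :=
  Xbar_ltg n F X i j *m Abar0 A k.-1 = Abar0 A k.-1 *m Xbar_ltg n F X i j.

Section Good.
Variables (A : 'M[C]_N) (i j k : nat).
Hypotheses (hi : (0 < i)%N) (hij : (i < j)%N) (hj : (j <= n)%N).
Let h1n : (0 < 1 < n)%N. Proof. by apply/andP; split => //; lia. Qed.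

Lemma Xbar_ltD X Y : Xbar_ltg n F (X + Y) i j = Xbar_ltg n F X i j + Xbar_ltg n F Y i j.
Proof.
have [U [V [_ _ E]]] := XbarU hi hij hj.
by rewrite !E op2D // mulmxDr mulmxDl.
Qed.

Lemma Xbar_ltZ c X : Xbar_ltg n F (c *: X) i j = c *: Xbar_ltg n F X i j.
Proof.
have [U [V [_ _ E]]] := XbarU hi hij hj.
by rewrite !E op2Z // -scalemxAr -scalemxAl.
Qed.

Lemma Xbar_ltM X Y : Xbar_ltg n F (X *m Y) i j = Xbar_ltg n F X i j *m Xbar_ltg n F Y i j.
Proof.
have [U [V [_ h2 E]]] := XbarU hi hij hj.
by rewrite !E -op2M // !mulmxA -(mulmxA _ V U) h2 mulmx1.
Qed.

Lemma Xbar_lt1 : Xbar_ltg n F 1%:M i j = 1%:M.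
Proof.
have [U [V [h1 _ E]]] := XbarU hi hij hj.
by rewrite E op21 // mulmx1.
Qed.

Lemma good_D X Y : good A i j k X -> good A i j k Y -> good A i j k (X + Y).
Proof. by rewrite /good !Xbar_ltD mulmxDl mulmxDr => -> ->. Qed.

Lemma good_Z c X : good A i j k X -> good A i j k (c *: X).
Proof. by rewrite /good !Xbar_ltZ -scalemxAl -scalemxAr => ->. Qed.

Lemma good_M X Y : good A i j k X -> good A i j k Y -> good A i j k (X *m Y).
Proof.
rewrite /good !Xbar_ltM => h1 h2.
by rewrite -mulmxA h2 mulmxA h1 mulmxA.
Qed.

Lemma good_1 : good A i j k 1%:M.
Proof. by rewrite /good Xbar_lt1 mulmx1 mul1mx. Qed.

End Good.

End Braid.

Transparent op2g op1g.

Local Open Scope complex_scope.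

Section Ana.
Variable R : realType.
Local Notation C := R[i].

Lemma realC (x : C) : 0 <= x -> x = (complex.Re x)%:C.
Proof.
move=> hx; have := ger0_Im hx.
by case: x hx => a b /= hx ->.
Qed.

Lemma le_small (x L : C) (s0 : R) : 0 <= x -> 0 <= L -> 0 < s0 ->
  (forall s : R, 0 < s -> s < s0 -> x <= L * s%:C) -> x = 0.
Proof.
move=> hx hL hs0 H.
have ex := realC hx; have eL := realC hL.
have hX : 0 <= complex.Re x by rewrite -ler0c -ex.
have hL' : 0 <= complex.Re L by rewrite -ler0c -eL.
rewrite ex eL in H *.
move: hX hL' H.
set X := complex.Re x; set L' := complex.Re L => hX hL0 H; clear hL.

suff : X <= 0 by move=> h; have -> : X = 0 by apply/eqP; rewrite eq_le h hX.
rewrite leNgt; apply/negP => hX0.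
pose s := Num.min (s0 / 2) (X / (L' + 1) / 2).
have hs1 : s <= s0 / 2 by rewrite /s ge_min lexx.
have hs2 : s <= X / (L' + 1) / 2 by rewrite /s ge_min lexx orbT.
have hspos : 0 < s.
  rewrite /s lt_min; apply/andP; split; first lra.
  by rewrite divr_gt0 // divr_gt0 //; lra.
have := H s hspos ltac:(lra).
rewrite -rmorphM /= lecR => h.
have h3 : s * (L' + 1) * 2 <= X.
  by rewrite -ler_pdivlMr // -ler_pdivlMr //; lra.
clear -hX hL0 hX0 hspos h h3; nra.
Qed.

Lemma key N m (Phi : 'M[C]_(N * N) -> 'M[C]_m) :
  (forall X Y, Phi (X + Y) = Phi X + Phi Y) ->
  (forall c X, Phi (c *: X) = c *: Phi X) ->
  forall r0 (Mb : C) (s0 : R), 0 < s0 -> 0 <= Mb ->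
  (forall s : R, 0 < s -> s < s0 -> exists h : C, [/\ 0 < `|h|, `|h| <= s%:C &
      exists E, Phi E = - h *: Phi r0 /\ forall a b, `|E a b| <= Mb * `|h| ^+ 2]) ->
  Phi r0 = 0.
Proof.
move=> PD PZ r0 Mb s0 hs0 hM H.
have P0 : Phi 0 = 0 by rewrite -(scale0r (0 : 'M[C]_(N * N))) PZ scale0r.
have Psum : forall (I : finType) (f : I -> 'M_(N * N)),
    Phi (\sum_i f i) = \sum_i Phi (f i).
  by move=> I f; apply: (big_morph Phi PD P0).
apply/matrixP => c d; rewrite mxE.
set K := \sum_a \sum_b `|Phi (delta_mx a b) c d|.
have hK : 0 <= K by apply: sumr_ge0 => a _; apply: sumr_ge0 => b _.
apply/eqP; rewrite -normr_eq0; apply/eqP.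
apply: (@le_small _ (Mb * K) s0) => //; first exact: mulr_ge0.
move=> s hs hss; have [h [hh1 hh2 [E [hE hEb]]]] := H s hs hss.
have eq1 : `|h| * `|Phi r0 c d| = `|Phi E c d|.
  by rewrite hE mxE normrM normrN.
have b1 : `|Phi E c d| <= Mb * `|h| ^+ 2 * K.
  rewrite {1}(matrix_sum_delta E) Psum.
  under eq_bigr => a _ do rewrite Psum.
  rewrite !summxE /K mulr_sumr.
  apply: le_trans (ler_norm_sum _ _ _) _; apply: ler_sum => a _.
  rewrite summxE mulr_sumr.
  apply: le_trans (ler_norm_sum _ _ _) _; apply: ler_sum => b _.
  rewrite PZ mxE normrM; apply: ler_wpM2r => //.
have b2 : `|Phi r0 c d| <= Mb * `|h| * K.
  rewrite -(@ler_pM2l _ `|h|) // eq1; apply: le_trans b1 _.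
  by rewrite expr2 !mulrA (mulrC `|h| Mb).
apply: le_trans b2 _.
rewrite -mulrA (mulrC `|h|) mulrA [X in _ <= X]mulrC mulrC.
by apply: ler_wpM2l => //; exact: mulr_ge0.
Qed.

End Ana.

Unset Implicit Arguments. Set Strict Implicit. Set Printing Implicit Defensive.

Theorem mainTheorem4 (R : realType) (N : nat) (F : 'M[R[i]]_(N * N))
    (r : R[i] -> R[i] -> 'M[R[i]]_(N * N)) :
  is_braiding F -> is_involutive F ->
  ((exists Rb : 'M[R[i]]_(N * N), is_braiding Rb /\ compatible Rb F) /\
     (forall u v, r u v = rat_r F u v)
   \/ (exists (Rq : R[i] -> 'M[R[i]]_(N * N)) (r0 : 'M[R[i]]_(N * N)),
        trig_family F Rq r0 /\ (forall u v, r u v = trig_r F r0 u v))) ->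
  forall (A : 'M[R[i]]_N) (n i j k : nat),
    (0 < i)%N -> (0 < j)%N -> (0 < k)%N ->
    (i <= n)%N -> (j <= n)%N -> (k <= n)%N ->
    i != j -> j != k -> i != k ->
  forall u v : R[i], u != v ->
    Xbar n F (r u v) i j *m Abar n F A k = Abar n F A k *m Xbar n F (r u v) i j.
Proof.
move=> HFb0 HFi0 Hr A n i j k hi hj hk hin hjn hkn hij hjk hik u v huv.
have HFb : is_braidingg F := HFb0.
have HFi : is_involutiveg F := HFi0.
have cFF : compatibleg F F.
  by case: HFb => _ Hb; split; [exact: Hb | exact: esym Hb].
have claim : forall i' j', (0 < i')%N -> (i' < j')%N -> (j' <= n)%N ->
    k != i' -> k != j' ->
    good n F A i' j' k (r u v) /\ good n F A i' j' k (F *m r u v *m F).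
  move=> i' j' hi' hij' hj' hki hkj.
  have goodF : good n F A i' j' k F.
    by apply: (goodX HFb HFi) => //; lia.
  suff gr : good n F A i' j' k (r u v).
    split; first exact: gr.
    exact: (good_M HFi hi' hij' hj' (good_M HFi hi' hij' hj' goodF gr) goodF).
  case: Hr => [[_ Hr] | [Rq [r0 [Htf Hr]]]].
    rewrite Hr /rat_r; exact: (good_Z HFi hi' hij' hj' _ goodF).
  rewrite Hr /trig_r; apply: (good_D HFi hi' hij' hj' (good_Z HFi hi' hij' hj' _ goodF)).
  rewrite -scaleNr; apply: (good_Z HFi hi' hij' hj').
  set Ab := Abar0g n F A k.-1.
  pose Phi (X : 'M[R[i]]_(N * N)) :=
    Xbar_ltg n F X i' j' *m Ab - Ab *m Xbar_ltg n F X i' j'.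
  have goodP X : good n F A i' j' k X -> Phi X = 0.
    by rewrite /good /Phi => ->; rewrite subrr.
  have PD X Y : Phi (X + Y) = Phi X + Phi Y.
    by rewrite /Phi (Xbar_ltD HFi hi' hij' hj') mulmxDl mulmxDr opprD addrACA.
  have PZ c X : Phi (c *: X) = c *: Phi X.
    by rewrite /Phi (Xbar_ltZ HFi hi' hij' hj') -scalemxAl -scalemxAr scalerBr.
  rewrite /good; apply/eqP; rewrite -subr_eq0; apply/eqP.
  case: Htf => rho [hrho [_ [Hcomp [HR1 [M [delta [hM [hdel Hexp]]]]]]]].
  pose s0 := Num.min (complex.Re rho) (complex.Re delta).
  have erho := realC (ltW hrho); have edel := realC (ltW hdel).
  have hs0 : 0 < s0.
    by rewrite /s0 lt_min; apply/andP; split; rewrite -ltcR -?erho -?edel.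
  apply: (@key R N _ Phi PD PZ r0 M s0 hs0 hM).
  move=> s hs hss.
  have hs1 : s < complex.Re rho by apply: (lt_le_trans hss); rewrite /s0 ge_min lexx.
  have hs2 : s < complex.Re delta by apply: (lt_le_trans hss); rewrite /s0 ge_min lexx orbT.
  pose h : R[i] := (ln (1 + s))%:C.
  have hlnpos : 0 < ln (1 + s) by apply: ln_gt0; lra.
  have hlnle : ln (1 + s) <= s by apply: le_ln1Dx; lra.
  have nh : `|h| = h by apply: ger0_norm; rewrite /h ler0c ltW.
  have hhs : `|h| <= s%:C by rewrite nh lecR.
  exists h; split => //; first by rewrite nh ltcR.
  have hq : expC h = (1 + s)%:C.
    rewrite /expC /h /= cos0 sin0 mulr1 mulr0 lnK //.
    by rewrite posrE; lra.
  have hdh : `|h| < delta.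
    by apply: le_lt_trans hhs _; rewrite edel ltcR.
  exists (Rq (expC h) *m F - 1%:M - h *: r0); split; last first.
    by move=> a b; apply: Hexp.
  have hq1 : `|expC h - 1| < rho.
    rewrite hq (_ : (1 + s)%:C - 1 = s%:C); last by rewrite rmorphD rmorph1 /= addrC addKr.
    by rewrite ger0_norm ?ler0c ?ltW // erho ltcR.
  have [Hc _] := Hcomp _ hq1.
  have gRF : good n F A i' j' k (Rq (expC h) *m F).
    exact: (good_M HFi hi' hij' hj' (goodX HFb HFi A Hc hi' hij' hj' hk hkn hki hkj) goodF).
  have e : Rq (expC h) *m F - 1%:M - h *: r0 =
      Rq (expC h) *m F + ((-1) *: 1%:M + (- h) *: r0).
    by rewrite scaleN1r scaleNr addrA.
  rewrite e !PD !PZ (goodP _ gRF) (goodP _ (good_1 HFi A k hi' hij' hj')).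
  by rewrite scaler0 !add0r.
rewrite /Xbar /Abar.
case: (ltnP i j) => hlt.
- have [g _] := claim i j hi hlt hjn ltac:(by rewrite eq_sym) ltac:(by rewrite eq_sym).
  exact: g.
- have hji : (j < i)%N by rewrite ltn_neqAle eq_sym hij hlt.
  have [_ g] := claim j i hj hji hin ltac:(by rewrite eq_sym) ltac:(by rewrite eq_sym).
  exact: g.
Qed.
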